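(* Let $V$ be a finite-dimensional real vector space with a non-degenerate inner product $g$, and $F\in\Lambda^5V^*$ a 5-form satisfying, for all $X,Y\in V$, $\iota_XF_L\wedge\iota_YF^L=0$ and $\iota_XF_L\wedge F^L=0$. Then $\iota_Y\iota_XF_L\wedge F^L=0$ and $\iota_Z\iota_Y\iota_XF_L\wedge F^L=0$ for all $X,Y,Z\in V$.
   Context: For a basis $e_L$ of $V$, $F_L=\iota_{e_L}F$, and expressions like $\alpha_L\wedge\beta^L$ denote the contraction $\sum_{L,K}g^{LK}\alpha_L\wedge\beta_K$ with the inverse metric. $\iota_X$ is interior multiplication by $X$. *)

(* Defs.v *)
From HB Require Import structures.
From mathcomp Require Import all_boot all_order all_algebra all_fingroup.
From mathcomp Require Import reals.
Set Implicit Arguments. Unset Strict Implicit. Unset Printing Implicit Defensive.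
Import Order.TTheory GRing.Theory Num.Theory.
Local Open Scope ring_scope.

(* V = R^n with standard basis e_0,...,e_(n-1).  A k-form on V is given by its
   components  F t = F(e_(t 0), ..., e_(t (k-1)))  for t : 'I_k -> 'I_n. *)
Definition kform (R : realType) (n k : nat) := {ffun 'I_k -> 'I_n} -> R.

Definition permidx n k (s : 'S_k) (t : {ffun 'I_k -> 'I_n}) : {ffun 'I_k -> 'I_n} :=
  [ffun i => t (s i)].

Definition alternating (R : realType) n k (F : kform R n k) : Prop :=
  forall (s : 'S_k) t, F (permidx s t) = (-1) ^+ odd_perm s * F t.

Definition basisv (R : realType) n (L : 'I_n) : 'rV[R]_n := delta_mx 0 L.

Definition idxcons n k (j : 'I_n) (t : {ffun 'I_k -> 'I_n}) : {ffun 'I_k.+1 -> 'I_n} :=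
  [ffun i => if unlift ord0 i is Some i' then t i' else j].

Definition intp (R : realType) n k (X : 'rV[R]_n) (F : kform R n k.+1) : kform R n k :=
  fun t => \sum_(j < n) X 0 j * F (idxcons j t).

Definition wedge (R : realType) n p q (a : kform R n p) (b : kform R n q) : kform R n (p + q) :=
  fun t => ((p`! * q`!)%:R)^-1 *
    \sum_(s : 'S_(p + q)) (-1) ^+ odd_perm s *
       a [ffun i => t (s (lshift q i))] * b [ffun i => t (s (rshift p i))].

(* contraction  a_L /\ b^L = sum_(L,K) g^(LK) a_L /\ b_K  with the inverse metric *)
Definition contr (R : realType) n p q (g : 'M[R]_n)
    (a : 'I_n -> kform R n p) (b : 'I_n -> kform R n q) : kform R n (p + q) :=
  fun t => \sum_(L < n) \sum_(K < n) (invmx g) L K * wedge (a L) (b K) t.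

Definition lowerL (R : realType) n k (F : kform R n k.+1) (L : 'I_n) : kform R n k :=
  intp (basisv R L) F.

(* Main.v *)
Require Import Defs.
From HB Require Import structures.
From mathcomp Require Import all_boot all_order all_algebra all_fingroup.
From mathcomp Require Import reals ring zify lra.
Import Order.TTheory GRing.Theory Num.Theory.
Local Open Scope ring_scope.
Set Implicit Arguments. Unset Strict Implicit. Unset Printing Implicit Defensive.

Section Forms.
Variables (R : realType) (n : nat).

Lemma sum_perm_fix N (i j : 'I_N.+1) (G : 'S_N.+1 -> R) :
  \sum_(s : 'S_N.+1 | s i == j) G s = \sum_(s : 'S_N) G (lift_perm i j s).
Proof.
rewrite (reindex (lift_perm i j)); last first.
  pose ulsf i (s : 'S_N.+1) k := odflt k (unlift (s i) (s (lift i k))).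
  have ulsfK i1 (s : 'S_N.+1) k: lift (s i1) (ulsf i1 s k) = s (lift i1 k).
    rewrite /ulsf; have:= neq_lift i1 k.
    by rewrite -(can_eq (permK s)) => /unlift_some[] ? ? ->.
  have inj_ulsf: injective (ulsf i _).
    move=> s; apply: can_inj (ulsf (s i) s^-1%g) _ => k'.
    by rewrite {1}/ulsf ulsfK !permK liftK.
  exists (fun s => perm (inj_ulsf s)) => [s _ | s].
    by apply/permP=> k'; rewrite permE /ulsf lift_perm_lift lift_perm_id liftK.
  move/(s _ =P _) => si0; apply/permP=> k.
  case: (unliftP i k) => [k'|] ->; rewrite ?lift_perm_id //.
  by rewrite lift_perm_lift -si0 permE ulsfK.
by apply: eq_bigl => s; rewrite lift_perm_id eqxx.
Qed.

Lemma idxcons_permidx k (j : 'I_n) (s : 'S_k) (t : {ffun 'I_k -> 'I_n}) :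
  idxcons j (permidx s t) = permidx (lift_perm ord0 ord0 s) (idxcons j t).
Proof.
apply/ffunP => i; rewrite /permidx !ffunE.
case: (unliftP ord0 i) => [i'|] ->.
  by rewrite lift_perm_lift liftK ffunE.
by rewrite (lift_perm_id ord0 ord0 s) unlift_none.
Qed.

Lemma alt_intp k (X : 'rV[R]_n) (F : kform R n k.+1) :
  alternating F -> alternating (intp X F).
Proof.
move=> HF s t; rewrite /intp big_distrr; apply: eq_bigr => j _ /=.
by rewrite idxcons_permidx HF odd_lift_perm /= mulrCA.
Qed.

Lemma alt_lowerL k (F : kform R n k.+1) L :
  alternating F -> alternating (lowerL F L).
Proof. exact: alt_intp. Qed.

End Forms.

Definition lsh2 p q (i : 'I_p.+1) : 'I_(p + q.+1) := cast_ord (addSnnS p q) (lshift q i).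
Definition rsh2 p q (i : 'I_q) : 'I_(p + q.+1) := cast_ord (addSnnS p q) (rshift p.+1 i).
Definition W2 (R : realType) n p q (a : kform R n p.+1) (b : kform R n q)
    (t : {ffun 'I_(p + q.+1) -> 'I_n}) : R :=
  (((p.+1)`! * q`!)%:R)^-1 * \sum_(s : 'S_(p + q.+1))
     (-1) ^+ odd_perm s * a [ffun i => t (s (@lsh2 p q i))] * b [ffun i => t (s (@rsh2 p q i))].

Section Leib.
Variables (R : realType) (n p q : nat).
Variables (a : kform R n p.+1) (b : kform R n q.+1).
Hypotheses (Ha : alternating a) (Hb : alternating b).

Definition Gt (u : {ffun 'I_(p.+1 + q.+1) -> 'I_n}) (s : 'S_(p.+1 + q.+1)) : R :=
  (-1) ^+ odd_perm s * a [ffun i => u (s (lshift q.+1 i))] * b [ffun i => u (s (rshift p.+1 i))].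

Lemma swap_a u (i : 'I_p.+1) :
  \sum_(s : 'S_(p.+1 + q.+1) | s (lshift q.+1 i) == ord0) Gt u s =
  \sum_(s : 'S_(p.+1 + q.+1) | s (lshift q.+1 (ord0 : 'I_p.+1)) == ord0) Gt u s.
Proof.
rewrite (reindex_inj (mulgI (tperm (lshift q.+1 (ord0 : 'I_p.+1)) (lshift q.+1 i)))) /=.
apply: eq_big => s; first by rewrite permM tpermR.
move=> _; rewrite /Gt odd_permM odd_tperm signr_addb (inj_eq (@lshift_inj _ _)).
have -> : [ffun m => u ((tperm (lshift q.+1 ord0) (lshift q.+1 i) * s)%g (lshift q.+1 m))]
   = permidx (tperm ord0 i) [ffun m => u (s (lshift q.+1 m))].
  apply/ffunP => m; rewrite /permidx !ffunE permM.
  by rewrite -(inj_tperm _ _ _ (@lshift_inj _ _)).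
have -> : [ffun m => u ((tperm (lshift q.+1 ord0) (lshift q.+1 i) * s)%g (rshift p.+1 m))]
   = [ffun m => u (s (rshift p.+1 m))].
  apply/ffunP => m; rewrite !ffunE permM tpermD //.
  by rewrite eq_lrshift.
rewrite Ha odd_tperm mulrA (mulrAC ((-1) ^+ _)) -signr_addb addbb expr0 mul1r.
reflexivity.
Qed.


Lemma swap_b u (i : 'I_q.+1) :
  \sum_(s : 'S_(p.+1 + q.+1) | s (rshift p.+1 i) == ord0) Gt u s =
  \sum_(s : 'S_(p.+1 + q.+1) | s (rshift p.+1 (ord0 : 'I_q.+1)) == ord0) Gt u s.
Proof.
rewrite (reindex_inj (mulgI (tperm (rshift p.+1 (ord0 : 'I_q.+1)) (rshift p.+1 i)))) /=.
apply: eq_big => s; first by rewrite permM tpermR.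
move=> _; rewrite /Gt odd_permM odd_tperm signr_addb (inj_eq (@rshift_inj _ _)).
have -> : [ffun m => u ((tperm (rshift p.+1 ord0) (rshift p.+1 i) * s)%g (rshift p.+1 m))]
   = permidx (tperm ord0 i) [ffun m => u (s (rshift p.+1 m))].
  apply/ffunP => m; rewrite /permidx !ffunE permM.
  by rewrite -(inj_tperm _ _ _ (@rshift_inj _ _)).
have -> : [ffun m => u ((tperm (rshift p.+1 ord0) (rshift p.+1 i) * s)%g (lshift q.+1 m))]
   = [ffun m => u (s (lshift q.+1 m))].
  apply/ffunP => m; rewrite !ffunE permM tpermD //; by rewrite ?eq_rlshift ?eq_lrshift.
rewrite Hb odd_tperm.
have sq : (-1) ^+ (ord0 != i) * (-1) ^+ (ord0 != i) = 1 :> R.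
  by rewrite -signr_addb addbb.
move: sq; set c := (-1) ^+ (ord0 != i); set x := (-1) ^+ odd_perm s.
set A := a _; set B := b _ => sq.
rewrite -[RHS]mul1r -sq; ring.
Qed.

Lemma split_sum u :
  \sum_(s : 'S_(p.+1 + q.+1)) Gt u s =
  p.+1%:R * \sum_(s : 'S_(p.+1 + q.+1) | s (lshift q.+1 (ord0 : 'I_p.+1)) == ord0) Gt u s +
  q.+1%:R * \sum_(s : 'S_(p.+1 + q.+1) | s (rshift p.+1 (ord0 : 'I_q.+1)) == ord0) Gt u s.
Proof.
rewrite (partition_big (fun s : 'S_(p.+1 + q.+1) => (s^-1)%g ord0) xpredT) //=.
rewrite big_split_ord /=.
have E (k : 'I_(p.+1 + q.+1)) (s : 'S_(p.+1 + q.+1)) :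
    ((s^-1)%g ord0 == k) = (s k == ord0).
  by apply/eqP/eqP => [<-|<-]; rewrite ?permKV ?permK.
congr (_ + _).
  rewrite (eq_bigr (fun _ => \sum_(s : 'S_(p.+1 + q.+1) | s (lshift q.+1 (ord0 : 'I_p.+1)) == ord0) Gt u s)).
    by rewrite sumr_const card_ord mulr_natl.
  move=> i _; rewrite -(swap_a u i); apply: eq_bigl => s; exact: E.
rewrite (eq_bigr (fun _ => \sum_(s : 'S_(p.+1 + q.+1) | s (rshift p.+1 (ord0 : 'I_q.+1)) == ord0) Gt u s)).
  by rewrite sumr_const card_ord mulr_natl.
move=> i _; rewrite -(swap_b u i); apply: eq_bigl => s; exact: E.
Qed.

Lemma G_lift0 j (t : {ffun 'I_(p + q.+1) -> 'I_n}) (s' : 'S_(p + q.+1)) :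
  Gt (idxcons j t) (lift_perm (lshift q.+1 (ord0 : 'I_p.+1)) ord0 s') =
  (-1) ^+ odd_perm s' * a (idxcons j [ffun i => t (s' (lshift q.+1 i))]) *
    b [ffun i => t (s' (rshift p i))].
Proof.
rewrite /Gt odd_lift_perm /=.
congr (_ * a _ * b _).
  apply/ffunP => i; rewrite !ffunE; case: (unliftP ord0 i) => [i'|] -> /=.
    have -> : lshift q.+1 (lift ord0 i') = lift (lshift q.+1 (ord0 : 'I_p.+1)) (lshift q.+1 i').
      by apply: val_inj.
    by rewrite lift_perm_lift liftK ffunE.
  by rewrite lift_perm_id unlift_none.
apply/ffunP => i; rewrite !ffunE.
have -> : rshift p.+1 i = lift (lshift q.+1 (ord0 : 'I_p.+1)) (rshift p i).
  by apply: val_inj.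
by rewrite lift_perm_lift liftK.
Qed.

Lemma G_lift1 j (t : {ffun 'I_(p + q.+1) -> 'I_n}) (s' : 'S_(p + q.+1)) :
  Gt (idxcons j t) (lift_perm (rshift p.+1 (ord0 : 'I_q.+1)) ord0 s') =
  (-1) ^+ (odd p.+1 (+) odd_perm s') * a [ffun i => t (s' (@lsh2 p q i))] *
    b (idxcons j [ffun i => t (s' (@rsh2 p q i))]).
Proof.
rewrite /Gt odd_lift_perm /= addn0.
congr (_ * a _ * b _).
  by rewrite addbF.
  apply/ffunP => i; rewrite !ffunE.
  have -> : lshift q.+1 i = lift (rshift p.+1 (ord0 : 'I_q.+1)) (@lsh2 p q i).
    apply: val_inj; rewrite /= /bump /=.
    by rewrite leqNgt (leq_trans (ltn_ord i) (leq_addr _ _)).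
  by rewrite lift_perm_lift liftK.
apply/ffunP => i; rewrite !ffunE; case: (unliftP ord0 i) => [i'|] -> /=.
  have -> : rshift p.+1 (lift ord0 i') = lift (rshift p.+1 (ord0 : 'I_q.+1)) (@rsh2 p q i').
    apply: val_inj; rewrite /= /bump /= leq_add2l leq0n /=.
    by rewrite add1n addnS addSn add1n.
  by rewrite lift_perm_lift liftK ffunE.
by rewrite lift_perm_id unlift_none.
Qed.

Lemma leibniz (X : 'rV[R]_n) t :
  intp X (wedge a b) t = wedge (intp X a) b t + (-1) ^+ p.+1 * W2 a (intp X b) t.
Proof.
set c := (((p.+1)`! * (q.+1)`!)%:R)^-1 : R.
have hc1 : c * p.+1%:R = ((p`! * (q.+1)`!)%:R)^-1.
  rewrite /c factS -mulnA natrM invfM mulrAC mulVf ?mul1r //.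
  by rewrite pnatr_eq0.
have hc2 : c * q.+1%:R = (((p.+1)`! * q`!)%:R)^-1.
  rewrite /c (factS q) mulnCA natrM invfM mulrAC mulVf ?mul1r //.
  by rewrite pnatr_eq0.
transitivity (\sum_j X 0 j * (c * \sum_(s : 'S_(p.+1 + q.+1)) Gt (idxcons j t) s)).
  reflexivity.
under eq_bigr => j _ do rewrite split_sum !sum_perm_fix
   (eq_bigr _ (fun s _ => G_lift0 j t s)) (eq_bigr _ (fun s _ => G_lift1 j t s)).
rewrite /wedge /W2 /intp.
under eq_bigr => j _ do rewrite mulrDr mulrDr.
rewrite big_split; congr (_ + _).
  rewrite [RHS]big_distrr.
  under [RHS]eq_bigr => s _ do rewrite ?big_distrr ?big_distrl ?big_distrr /=.
  rewrite exchange_big; apply: eq_bigr => j _ /=.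
  rewrite !big_distrr; apply: eq_bigr => s _ /=.
  rewrite -hc1.
  set x := (-1) ^+ _; set A := a _; set B := b _; ring.
rewrite [in RHS]big_distrr [in RHS]big_distrr.
under [RHS]eq_bigr => s _ do rewrite ?big_distrr ?big_distrl ?big_distrr /=.
rewrite exchange_big; apply: eq_bigr => j _ /=.
rewrite !big_distrr; apply: eq_bigr => s _ /=.
rewrite -hc2 signr_addb -(signr_odd _ p.+1) /=.
set x := (-1) ^+ odd_perm _; set y := (-1) ^+ (~~ odd p); set A := a _; set B := b _; ring.
Qed.

End Leib.

Section S.
Variables (R : realType) (n : nat).

Lemma W2_233 (a : kform R n 3) (b : kform R n 3) t : W2 a b t = wedge a b t.
Proof.
rewrite /W2 /wedge; congr (_ * _); apply: eq_bigr => s _.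
congr (_ * a _ * b _); apply/ffunP => i; rewrite !ffunE; congr (t (s _)); exact: val_inj.
Qed.

Definition o5 k (H : (k < 5)%N) : 'I_5 := Ordinal H.
Definition rho : 'S_5 := (tperm (o5 (isT : (0 < 5)%N)) (o5 (isT : (3 < 5)%N)) * tperm (o5 (isT : (0 < 5)%N)) (o5 (isT : (1 < 5)%N))
   * tperm (o5 (isT : (0 < 5)%N)) (o5 (isT : (4 < 5)%N)) * tperm (o5 (isT : (0 < 5)%N)) (o5 (isT : (2 < 5)%N)))%g.

Lemma rho_even : odd_perm rho = false.
Proof. by rewrite /rho !odd_permM !odd_tperm. Qed.

Lemma rho_l (i : 'I_2) : rho (lshift 3 i) = rshift 3 i.
Proof.
apply: val_inj; rewrite /rho !permM.
by case: i => [[|[|?]] Hi] //; rewrite !permE.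
Qed.

Lemma rho_r (i : 'I_3) : rho (rshift 2 i) = lshift 2 i.
Proof.
apply: val_inj; rewrite /rho !permM.
by case: i => [[|[|[|?]]] Hi] //; rewrite !permE.
Qed.

Lemma swap_32 (a : kform R n 3) (b : kform R n 2) (t : {ffun 'I_(3 + 2) -> 'I_n}) :
  wedge a b t = wedge b a t.
Proof.
rewrite /wedge mulnC; congr (_ * _); apply/esym.
rewrite (reindex_inj (mulgI rho)); apply: eq_bigr => s _.
rewrite odd_permM rho_even /=.
have -> : [ffun i : 'I_2 => t ((rho * s)%g (lshift 3 i))] = [ffun i : 'I_2 => t (s (rshift 3 i))].
  by apply/ffunP => i; rewrite !ffunE permM rho_l.
have -> : [ffun i : 'I_3 => t ((rho * s)%g (rshift 2 i))] = [ffun i : 'I_3 => t (s (lshift 2 i))].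
  by apply/ffunP => i; rewrite !ffunE permM rho_r.
by rewrite mulrAC.
Qed.

Lemma W2_132 (a : kform R n 2) (b : kform R n 3) t : W2 a b t = wedge a b t.
Proof.
rewrite /W2 /wedge; congr (_ * _); apply: eq_bigr => s _.
congr (_ * a _ * b _); apply/ffunP => i; rewrite !ffunE; congr (t (s _)); exact: val_inj.
Qed.

Lemma W2_222 (a : kform R n 3) (b : kform R n 2) t : W2 a b t = wedge a b t.
Proof.
rewrite /W2 /wedge; congr (_ * _); apply: eq_bigr => s _.
congr (_ * a _ * b _); apply/ffunP => i; rewrite !ffunE; congr (t (s _)); exact: val_inj.
Qed.

Lemma contr_leib p q (g : 'M[R]_n) (A : 'I_n -> kform R n p.+1) (B : 'I_n -> kform R n q.+1)
  (HA : forall L, alternating (A L)) (HB : forall K, alternating (B K)) (Y : 'rV[R]_n) t :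
  intp Y (contr g A B) t = contr g (fun L => intp Y (A L)) B t +
    (-1) ^+ p.+1 * \sum_(L < n) \sum_(K < n) invmx g L K * W2 (A L) (intp Y (B K)) t.
Proof.
transitivity (\sum_(L < n) \sum_(K < n) invmx g L K * intp Y (wedge (A L) (B K)) t).
  rewrite /intp /contr.
  under eq_bigr => j _ do rewrite big_distrr.
  rewrite exchange_big /=; apply: eq_bigr => L _.
  under eq_bigr => j _ do rewrite big_distrr.
  rewrite exchange_big /=; apply: eq_bigr => K _.
  rewrite big_distrr; apply: eq_bigr => j _ /=.
  by rewrite mulrCA.
under eq_bigr => L _ do under eq_bigr => K _ do rewrite leibniz //.
rewrite /contr big_distrr -big_split; apply: eq_bigr => L _ /=.
rewrite big_distrr -big_split; apply: eq_bigr => K _ /=.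
rewrite mulrDr; congr (_ + _); exact: mulrCA.
Qed.

Lemma intp_zero k (Y : 'rV[R]_n) (F : kform R n k.+1) t :
  (forall t, F t = 0) -> intp Y F t = 0.
Proof. by move=> H; rewrite /intp big1 // => j _; rewrite H mulr0. Qed.

Lemma unlift00 m : unlift (ord0 : 'I_m.+1) ord0 = None.
Proof. exact: unlift_none. Qed.

Lemma idxcons_swap k (i j : 'I_n) (t : {ffun 'I_k -> 'I_n}) :
  idxcons j (idxcons i t) = permidx (tperm ord0 (lift ord0 ord0)) (idxcons i (idxcons j t)).
Proof.
apply/ffunP => m; rewrite /permidx !ffunE.
case: (unliftP ord0 m) => [m'|] -> /=.
  case: (unliftP ord0 m') => [m''|] -> /=.
    rewrite tpermD; last 2 first.
        exact: neq_lift.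
      by rewrite (inj_eq (@lift_inj _ _)) neq_lift.
    rewrite !(ffunE, liftK); reflexivity.
  rewrite tpermR ?ffunE !unlift00; reflexivity.
rewrite tpermL ?ffunE liftK ?ffunE ?unlift00; reflexivity.
Qed.

Lemma intp_anti k (X Y : 'rV[R]_n) (h : kform R n k.+2) t :
  alternating h -> intp Y (intp X h) t = - intp X (intp Y h) t.
Proof.
move=> Hh; rewrite /intp.
under eq_bigr => j _ do rewrite big_distrr.
rewrite exchange_big -sumrN; apply: eq_bigr => i _ /=.
rewrite big_distrr -sumrN; apply: eq_bigr => j _ /=.
rewrite (idxcons_swap i j) Hh odd_tperm neq_lift expr1; ring.
Qed.

End S.


Definition A3 (R : realType) n (g : 'M[R]_n) (F : kform R n 5) (X Y Z : 'rV[R]_n) t :=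
  contr g (fun L => intp Y (intp X (lowerL F L))) (fun L => intp Z (lowerL F L)) t.

Theorem mainTheorem10 (R : realType) (n : nat) (g : 'M[R]_n)
  (g_sym : g^T = g) (g_nondeg : g \in unitmx)
  (F : kform R n 5) (F_alt : alternating F)
  (H1 : forall X Y : 'rV[R]_n, forall t,
     contr g (fun L => intp X (lowerL F L)) (fun L => intp Y (lowerL F L)) t = 0)
  (H2 : forall X : 'rV[R]_n, forall t,
     contr g (fun L => intp X (lowerL F L)) (fun L => lowerL F L) t = 0) :
  (forall X Y : 'rV[R]_n, forall t,
     contr g (fun L => intp Y (intp X (lowerL F L))) (fun L => lowerL F L) t = 0) /\
  (forall X Y Z : 'rV[R]_n, forall t,
     contr g (fun L => intp Z (intp Y (intp X (lowerL F L)))) (fun L => lowerL F L) t = 0).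
Proof.
have ginvT L K : invmx g K L = invmx g L K.
  have := congr1 (fun M : 'M[R]_n => M K L) (trmx_inv g).
  by rewrite g_sym mxE => <-.
have Hf L : alternating (lowerL F L) by exact: alt_lowerL.
have C1 : forall X Y t, contr g (fun L => intp Y (intp X (lowerL F L))) (fun L => lowerL F L) t = 0.
  move=> X Y t.
  have := @contr_leib R n 2 3 g (fun L => intp X (lowerL F L)) (fun L => lowerL F L)
     (fun L => alt_intp X (Hf L)) Hf Y t.
  rewrite intp_zero; last exact: H2 X.
  under eq_bigr do under eq_bigr do rewrite W2_233.
  have E2 : \sum_(L < n) \sum_(K < n) invmx g L K *
     wedge (intp X (lowerL F L)) (intp Y (lowerL F K)) t = 0 := H1 X Y t.
  by rewrite E2 mulr0 addr0 => ->.
split; first exact: C1.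
have Ea X Y Z t : contr g (fun L => intp Z (intp Y (intp X (lowerL F L)))) (fun L => lowerL F L) t
    = - A3 g F X Y Z t.
  have := @contr_leib R n 1 3 g (fun L => intp Y (intp X (lowerL F L))) (fun L => lowerL F L)
     (fun L => alt_intp Y (alt_intp X (Hf L))) Hf Z t.
  rewrite intp_zero; last exact: C1 X Y.
  under eq_bigr do under eq_bigr do rewrite W2_132.
  rewrite expr2 mulrNN !mul1r => /eqP; rewrite eq_sym addr_eq0 => /eqP ->.
  reflexivity.
have Eb X Y Z t : A3 g F X Y Z t =
    contr g (fun L => intp X (lowerL F L)) (fun K => intp Y (intp Z (lowerL F K))) t.
  have := @contr_leib R n 2 2 g (fun L => intp X (lowerL F L)) (fun L => intp Z (lowerL F L))
     (fun L => alt_intp X (Hf L)) (fun L => alt_intp Z (Hf L)) Y t.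
  rewrite intp_zero; last exact: H1 X Z.
  under eq_bigr do under eq_bigr do rewrite W2_222.
  rewrite exprS expr2 mulrNN mulr1 !mulN1r => /eqP; rewrite eq_sym subr_eq0 => /eqP.
  by rewrite /A3 => ->.
have Ec X Y Z t :
    contr g (fun L => intp X (lowerL F L)) (fun K => intp Y (intp Z (lowerL F K))) t
    = A3 g F Z Y X t.
  rewrite /A3 /contr exchange_big; apply: eq_bigr => K _; apply: eq_bigr => L _ /=.
  by rewrite swap_32 ginvT.
have Ed X Y Z t : A3 g F X Y Z t = - A3 g F Y X Z t.
  rewrite /A3 /contr -sumrN; apply: eq_bigr => L _; rewrite -sumrN; apply: eq_bigr => K _.
  rewrite /wedge -mulrN -mulrN -sumrN; congr (_ * (_ * _)); apply: eq_bigr => s _.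
  by rewrite intp_anti // mulrN mulNr.
have S13 X Y Z t : A3 g F X Y Z t = A3 g F Z Y X t by rewrite Eb Ec.
have A0 X Y Z t : A3 g F X Y Z t = 0.
  have : A3 g F X Y Z t = - A3 g F X Y Z t.
    rewrite [in LHS]S13 [in LHS]Ed [in LHS]S13 [in LHS]Ed [in LHS]S13 [in LHS]Ed.
    by rewrite !opprK.
  move=> h; lra.
by move=> X Y Z t; rewrite Ea A0 oppr0.
Qed.
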